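(* Let $Z\subseteq\{0,1\}^n$ and $$X=\{(\bm x,\bm z)\in\mathbb R^n\times Z:\ \|\bm x\|_2^2\le 1,\ x_i(1-z_i)=0\ \text{for } i=1,\dots,n\}.$$ Then $$\operatorname{conv}(X)=\bigcap_{\bm\alpha\in\mathbb R^n}P(\bm\alpha).$$
   Context: For $\bm\alpha\in\mathbb R^n$, $P_0(\bm\alpha)=\{(\bm x,\bm z)\in\mathbb R^n\times Z:\ \sum_{i=1}^n|\alpha_ix_i|\le\sqrt{\sum_{i=1}^n\alpha_i^2z_i}\}$ and $P(\bm\alpha)=\operatorname{conv}(P_0(\bm\alpha))$, the convex hull. *)

(* Defs.v *)
From HB Require Import structures.
From mathcomp Require Import all_boot all_order all_algebra.
From mathcomp Require Import classical_sets reals.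
Set Implicit Arguments. Unset Strict Implicit. Unset Printing Implicit Defensive.
Import Order.TTheory GRing.Theory Num.Theory.
Local Open Scope ring_scope.
Local Open Scope classical_set_scope.

Definition pt (R : realType) (n : nat) := (('I_n -> R) * ('I_n -> R))%type.

Definition conv (R : realType) (n : nat) (S : set (pt R n)) : set (pt R n) :=
  fun p => exists (m : nat) (l : 'I_m -> R) (q : 'I_m -> pt R n),
    [/\ (forall k, 0 <= l k), \sum_(k < m) l k = 1, (forall k, S (q k)),
        (forall i, p.1 i = \sum_(k < m) l k * (q k).1 i) &
        (forall i, p.2 i = \sum_(k < m) l k * (q k).2 i)].

Definition Xset (R : realType) (n : nat) (Z : set ('I_n -> R)) : set (pt R n) :=
  fun p => [/\ Z p.2, \sum_(i < n) p.1 i ^+ 2 <= 1 &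
               forall i, p.1 i * (1 - p.2 i) = 0].

Definition P0 (R : realType) (n : nat) (Z : set ('I_n -> R)) (alpha : 'I_n -> R)
  : set (pt R n) :=
  fun p => Z p.2 /\
    \sum_(i < n) `|alpha i * p.1 i| <= Num.sqrt (\sum_(i < n) alpha i ^+ 2 * p.2 i).

Definition Pset (R : realType) (n : nat) (Z : set ('I_n -> R)) (alpha : 'I_n -> R)
  : set (pt R n) := conv (P0 Z alpha).

(* Main.v *)
Require Import Defs.
From HB Require Import structures.
From mathcomp Require Import all_boot all_order all_algebra.
From mathcomp Require Import classical_sets reals.
From mathcomp Require Import boolp topology normedtype derive matrix_normedtype.
From mathcomp Require Import ring lra.
Import Order.TTheory GRing.Theory Num.Theory.
Import numFieldNormedType.Exports.
Local Open Scope ring_scope.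
Local Open Scope classical_set_scope.
Set Implicit Arguments. Unset Strict Implicit. Unset Printing Implicit Defensive.

Lemma eqle (R : realType) (x y : R) : x = y -> x <= y. Proof. by move=> ->. Qed.

Lemma cs_lite (R : realType) n (w v : 'I_n -> R) (m : R) : 0 <= m ->
  \sum_i w i ^+ 2 <= m ^+ 2 -> \sum_i v i ^+ 2 <= 1 -> \sum_i w i * v i <= m.
Proof.
move=> m0 hw hv.
have [m00|mgt0] : m = 0 \/ 0 < m by move: m0; rewrite le_eqVlt => /orP[/eqP<-|->]; [left|right].
  subst m.
  have w0 : forall i, w i = 0.
    move=> i; apply/eqP; rewrite -sqrf_eq0; apply/eqP.
    apply: (@psumr_eq0P _ _ xpredT (fun i => w i ^+ 2)) => //.
      by move=> j _; rewrite sqr_ge0.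
    apply/le_anti; rewrite sumr_ge0 ?andbT; last by move=> j _; rewrite sqr_ge0.
    by move: hw; rewrite expr0n.
  by rewrite big1 // => i _; rewrite w0 mul0r.
have h : \sum_i (2 * m * (w i * v i)) <= \sum_i (w i ^+ 2 + m ^+ 2 * v i ^+ 2).
  by apply: ler_sum => i _; have := sqr_ge0 (w i - m * v i); nra.
rewrite -mulr_sumr big_split /= -mulr_sumr in h.
have h2 : m ^+ 2 * \sum_i v i ^+ 2 <= m ^+ 2 * 1 by rewrite ler_pM2l ?exprn_gt0.
set S := \sum_i w i * v i in h *.
have : 0 < (S - m) * m -> False by move=> hh; nra.
by move=> hh; rewrite leNgt; apply/negP => hS; apply: hh; rewrite mulr_gt0 // subr_gt0.
Qed.

Lemma zb01 (R : realType) (z : R) : z = 0 \/ z = 1 -> z * z = z /\ z * (1 - z) = 0.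
Proof. by case=> ->; split; ring. Qed.

Lemma X_sub_P0 (R : realType) n (Z : set ('I_n -> R))
  (HZ : forall z, Z z -> forall i, z i = 0 \/ z i = 1) alpha :
  Xset Z `<=` P0 Z alpha.
Proof.
move=> [x z] [/= Zz hx hxz]; split => //=.
have hz := HZ _ Zz.
set D := Num.sqrt _.
have e1 : \sum_i `|alpha i * x i| = \sum_i (`|alpha i| * z i) * `|x i|.
  apply: eq_bigr => i _; have := hxz i; case: (hz i) => -> /=.
    by rewrite subr0 mulr1 => ->; rewrite !(mulr0, normr0, mul0r).
  by rewrite mulr1 normrM.
rewrite e1; apply: cs_lite; first exact: sqrtr_ge0.
  rewrite sqr_sqrtr; last by apply: sumr_ge0 => i _; rewrite mulr_ge0 ?sqr_ge0 //; case: (hz i) => ->.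
  apply: eqle; apply: eq_bigr => i _; rewrite exprMn real_normK ?num_real //.
  by case: (hz i) => ->; ring.
by apply: le_trans hx; apply: eqle; apply: eq_bigr => i _; rewrite real_normK ?num_real.
Qed.

Lemma conv_mono (R : realType) n (S T : set (pt R n)) : S `<=` T -> conv S `<=` conv T.
Proof.
move=> ST p [m [l [q [h1 h2 h3 h4 h5]]]]; exists m, l, q; split => // k; exact: ST.
Qed.

Definition dotp (R : realType) n (d p : pt R n) : R :=
  \sum_i d.1 i * p.1 i + \sum_i d.2 i * p.2 i.

Lemma conv_dot (R : realType) n (S : set (pt R n)) d c p :
  conv S p -> (forall y, S y -> dotp d y <= c) -> dotp d p <= c.
Proof.
move=> [m [l [q [h1 h2 h3 h4 h5]]]] hS.
have -> : dotp d p = \sum_k l k * dotp d (q k).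
  rewrite /dotp.
  under eq_bigr => i _ do rewrite h4 mulr_sumr.
  under [X in _ + X]eq_bigr => i _ do rewrite h5 mulr_sumr.
  rewrite exchange_big [X in _ + X]exchange_big -big_split /=; apply: eq_bigr => k _.
  rewrite mulrDr !mulr_sumr; congr (_ + _); apply: eq_bigr => i _; ring.
have -> : c = \sum_k l k * c by rewrite -mulr_suml h2 mul1r.
by apply: ler_sum => k _; rewrite ler_wpM2l // hS.
Qed.

Lemma P0_le (R : realType) n (Z : set ('I_n -> R))
  (HZ : forall z, Z z -> forall i, z i = 0 \/ z i = 1) (a b : 'I_n -> R) (q0 : pt R n) :
  P0 Z a q0 -> exists y, Xset Z y /\ dotp (a, b) q0 <= dotp (a, b) y.
Proof.
case: q0 => x z [/= Zz hD].
have hz := HZ _ Zz.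
set D := Num.sqrt _ in hD.
have hD2 : D ^+ 2 = \sum_i a i ^+ 2 * z i.
  rewrite sqr_sqrtr //; apply: sumr_ge0 => i _; rewrite mulr_ge0 ?sqr_ge0 //.
  by case: (hz i) => ->.
have hDD : D ^+ 2 / D = D.
  have [->|D0] := eqVneq D 0; first by rewrite expr0n /= mul0r.
  by rewrite expr2 mulfK.
clearbody D.
exists ((fun i => a i * z i / D), z); split.
  split => //=.
    have -> : \sum_i (a i * z i / D) ^+ 2 = D ^+ 2 / D ^+ 2.
      rewrite {1}hD2 mulr_suml; apply: eq_bigr => i _; rewrite expr_div_n exprMn.
      by case: (hz i) => ->; ring.
    have [->|D0] := eqVneq D 0; first by rewrite expr0n /= mul0r.
    by rewrite divff // expf_neq0.
  by move=> i; case: (hz i) => ->; ring.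
rewrite /dotp /= lerD2r.
apply: (le_trans (y := \sum_i `|a i * x i|)).
  by apply: ler_sum => i _; apply: ler_norm.
apply: le_trans hD _; apply: eqle.
rewrite -{1}hDD hD2 mulr_suml; apply: eq_bigr => i _; ring.
Qed.

Definition Kn n := #|{ffun 'I_n -> bool}|.
Definition prm (R : realType) n := 'rV[R]_(Kn n * n.+1).
Definition bv n (r : 'I_(Kn n)) : {ffun 'I_n -> bool} := enum_val r.
Definition zb (R : realType) n (r : 'I_(Kn n)) : 'I_n -> R := fun i => (bv r i)%:R.
Definition mu (R : realType) n (th : prm R n) r : R := th ord0 (mxvec_index r ord0).
Definition wv (R : realType) n (th : prm R n) r (i : 'I_n) : R :=
  th ord0 (mxvec_index r (lift ord0 i)).
Definition mkprm (R : realType) n (m : 'I_(Kn n) -> R) (w : 'I_(Kn n) -> 'I_n -> R)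
  : prm R n :=
  mxvec (\matrix_(r, c) match unlift ord0 c with Some i => w r i | None => m r end).

Lemma mu_mk (R : realType) n m w r : mu (@mkprm R n m w) r = m r.
Proof. by rewrite /mu /mkprm mxvecE mxE unlift_none. Qed.
Lemma wv_mk (R : realType) n m w r i : wv (@mkprm R n m w) r i = w r i.
Proof. by rewrite /wv /mkprm mxvecE mxE liftK. Qed.

Definition Fp (R : realType) n (th : prm R n) : pt R n :=
  (fun i => \sum_r wv th r i, fun i => \sum_r mu th r * zb R r i).

Definition Theta (R : realType) n (Z : set ('I_n -> R)) : set (prm R n) :=
  [set th | forall r, 0 <= mu th r] `&` [set th | \sum_r mu th r = 1] `&`
  [set th | forall r, ~ Z (zb R r) -> mu th r = 0] `&`
  [set th | forall r, \sum_i wv th r i ^+ 2 <= mu th r ^+ 2] `&`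
  [set th | forall r i, bv r i = false -> wv th r i = 0].

Lemma sum_delta (R : realType) k (r0 : 'I_k) (c : 'I_k -> R) :
  \sum_r (r == r0)%:R * c r = c r0.
Proof.
rewrite (bigD1 r0) //= eqxx mul1r big1 ?addr0 // => r /negbTE ->; by rewrite mul0r.
Qed.

Lemma sq0 (R : realType) n (w : 'I_n -> R) : \sum_i w i ^+ 2 <= 0 -> forall i, w i = 0.
Proof.
move=> hw i; apply/eqP; rewrite -sqrf_eq0; apply/eqP.
apply: (@psumr_eq0P _ _ xpredT (fun i => w i ^+ 2)) => //.
  by move=> j _; rewrite sqr_ge0.
by apply/le_anti; rewrite sumr_ge0 ?andbT // => j _; rewrite sqr_ge0.
Qed.

Lemma Fp_conv (R : realType) n (Z : set ('I_n -> R)) z0 (Zz0 : Z z0) th :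
  Theta Z th -> conv (Xset Z) (Fp th).
Proof.
move=> [[[[h1 h2] h3] h4] h5].
have w0 : forall r, ~ 0 < mu th r -> forall i, wv th r i = 0.
  move=> r hr; apply: sq0; apply: le_trans (h4 r) _.
  have -> : mu th r = 0 by apply/le_anti; rewrite h1 andbT leNgt; apply/negP.
  by rewrite expr0n.
have m0 : forall r, ~ 0 < mu th r -> mu th r = 0.
  by move=> r hr; apply/le_anti; rewrite h1 andbT leNgt; apply/negP.
exists (Kn n), (mu th),
  (fun r => if 0 < mu th r then ((fun i => wv th r i / mu th r), zb R r)
            else ((fun=> 0), z0)).
split => //.
- move=> r; case: ifP => hr; last first.
    split => //=; last by move=> i; rewrite mul0r.
    by rewrite big1 ?ler01 // => i _; rewrite expr0n.
  split => /=.
  + by apply: contrapT => hz; move: hr; rewrite h3 // ltxx.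
  + have -> : \sum_i (wv th r i / mu th r) ^+ 2 = (\sum_i wv th r i ^+ 2) / mu th r ^+ 2.
      by rewrite mulr_suml; apply: eq_bigr => i _; rewrite expr_div_n.
    by rewrite ler_pdivrMr ?exprn_gt0 // mul1r.
  + move=> i; rewrite /zb; case e: (bv r i); first by rewrite subrr mulr0.
    by rewrite h5 // mul0r mul0r.
- move=> i /=; apply: eq_bigr => r _; case: ifP => hr /=.
    by rewrite mulrC divfK // gt_eqF.
  by rewrite w0 ?hr // mulr0.
- move=> i /=; apply: eq_bigr => r _; case: ifP => hr //=.
  by rewrite m0 ?hr // !mul0r.
Qed.

Lemma merge (R : realType) n (Z : set ('I_n -> R))
  (HZ : forall z, Z z -> forall i, z i = 0 \/ z i = 1) th y t :
  Theta Z th -> Xset Z y -> 0 <= t -> t <= 1 ->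
  exists th', Theta Z th' /\
    Fp th' = ((fun i => (1 - t) * (Fp th).1 i + t * y.1 i),
              (fun i => (1 - t) * (Fp th).2 i + t * y.2 i)).
Proof.
move=> [[[[h1 h2] h3] h4] h5] [Zy hy hyz] t0 t1.
have hz := HZ _ Zy.
pose r0 : 'I_(Kn n) := enum_rank ([ffun i => y.2 i == 1] : {ffun 'I_n -> bool}).
have bv0 : bv r0 = [ffun i => y.2 i == 1] by rewrite /bv enum_rankK.
have zb0 : zb R r0 = y.2.
  by apply: funext => i; rewrite /zb bv0 ffunE; case: (hz i) => ->; rewrite ?eqxx // eq_sym oner_eq0.
exists (mkprm (fun r => (1 - t) * mu th r + t * (r == r0)%:R)
              (fun r i => (1 - t) * wv th r i + t * (r == r0)%:R * y.1 i)).
split; last first.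
  congr pair; apply: funext => i /=.
    under eq_bigr => r _ do rewrite wv_mk.
    rewrite big_split /= -mulr_sumr; congr (_ + _).
    have -> : \sum_r t * (r == r0)%:R * y.1 i = \sum_r (r == r0)%:R * (t * y.1 i).
      by apply: eq_bigr => r _; ring.
    by rewrite sum_delta.
  under eq_bigr => r _ do rewrite mu_mk mulrDl.
  rewrite big_split /= mulr_sumr; congr (_ + _).
    by apply: eq_bigr => r _; ring.
  have -> : \sum_r t * (r == r0)%:R * zb R r i = \sum_r (r == r0)%:R * (t * zb R r i).
    by apply: eq_bigr => r _; ring.
  by rewrite sum_delta zb0.
have t1' : 0 <= 1 - t by rewrite subr_ge0.
split; [split; [split; [split|]|]|].
- by move=> r; rewrite mu_mk addr_ge0 ?mulr_ge0 ?ler0n.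
- rewrite /=; under eq_bigr => r _ do rewrite mu_mk.
  rewrite big_split /= -mulr_sumr h2 -mulr_sumr.
  rewrite (_ : \sum_r (r == r0)%:R = \sum_r (r == r0)%:R * (1 : R)).
    by rewrite sum_delta; ring.
  by apply: eq_bigr => r _; rewrite mulr1.
- move=> r hr; rewrite mu_mk h3 // mulr0 add0r.
  case: eqP => [er|]; last by rewrite mulr0.
  by exfalso; apply: hr; rewrite er zb0.
- move=> r; under eq_bigr => i _ do rewrite wv_mk; rewrite mu_mk.
  case: eqP => _; last first.
    under eq_bigr => i _ do rewrite mulr0 mul0r addr0 exprMn.
    by rewrite -mulr_sumr mulr0 addr0 exprMn ler_wpM2l // exprn_ge0.
  have hC := cs_lite (h1 r) (h4 r) hy.
  set A := \sum_i wv th r i ^+ 2 in h4 *.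
  set B := \sum_i y.1 i ^+ 2 in hy *.
  set C := \sum_i wv th r i * y.1 i in hC.
  have -> : \sum_i ((1 - t) * wv th r i + t * 1%:R * y.1 i) ^+ 2 =
        (1 - t) ^+ 2 * A + 2 * t * (1 - t) * C + t ^+ 2 * B.
    rewrite /A /B /C !mulr_sumr -!big_split /=; apply: eq_bigr => i _; ring.
  have e1 : (1 - t) ^+ 2 * A <= (1 - t) ^+ 2 * mu th r ^+ 2.
    by rewrite ler_wpM2l ?exprn_ge0 //; apply: h4.
  have e2 : 2 * t * (1 - t) * C <= 2 * t * (1 - t) * mu th r.
    by rewrite ler_wpM2l // !mulr_ge0.
  have e3 : t ^+ 2 * B <= t ^+ 2 * 1 by rewrite ler_wpM2l ?exprn_ge0.
  apply: le_trans (lerD (lerD e1 e2) e3) _; apply: eqle; rewrite /=; ring.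
- move=> r i hri; rewrite wv_mk h5 // mulr0 add0r.
  case: eqP => er; last by rewrite !mulr0 mul0r.
  move: hri; rewrite er bv0 ffunE.
  case: (hz i) => e; last by rewrite e eqxx.
  by move=> _; have := hyz i; rewrite e subr0 mulr1 => ->; rewrite mulr0.
Qed.

Lemma cont_sum (T : topologicalType) (R : realType) (I : Type) (s : seq I) (P : pred I)
  (F : I -> T -> R) :
  (forall i, continuous (F i)) -> continuous (fun x => \sum_(i <- s | P i) F i x).
Proof.
move=> hF; elim: s => [|a s IH].
  have -> : (fun x => \sum_(i <- [::] | P i) F i x) = fun=> 0.
    by apply: funext => x; rewrite big_nil.
  exact: cst_continuous.
have -> : (fun x => \sum_(i <- a :: s | P i) F i x) =
    (fun x => (if P a then F a x else 0) + \sum_(i <- s | P i) F i x).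
  by apply: funext => x; rewrite big_cons; case: (P a) => //; rewrite add0r.
move=> x; apply: (@continuousD _ _ _ (fun x => if P a then F a x else 0)); last exact: IH.
by case: (P a); [apply: hF | apply: cst_continuous].
Qed.

Lemma contM (T : topologicalType) (R : realType) (f g : T -> R) :
  continuous f -> continuous g -> continuous (fun x => f x * g x).
Proof. by move=> cf cg x; exact: (@continuousM _ _ f g x (cf x) (cg x)). Qed.

Lemma contD (T : topologicalType) (R : realType) (f g : T -> R) :
  continuous f -> continuous g -> continuous (fun x => f x + g x).
Proof. by move=> cf cg x; exact: (@continuousD _ _ _ f g x (cf x) (cg x)). Qed.

Lemma contB (T : topologicalType) (R : realType) (f g : T -> R) :
  continuous f -> continuous g -> continuous (fun x => f x - g x).
Proof. by move=> cf cg x; exact: (@continuousB _ _ _ f g x (cf x) (cg x)). Qed.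

Lemma closed_forall (T : topologicalType) I (P : I -> T -> Prop) :
  (forall i, closed [set x | P i x]) -> closed [set x | forall i, P i x].
Proof.
move=> h x clx i; apply: (h i) => B nB; have [y [Py By]] := clx B nB.
by exists y; split => //; exact: Py i.
Qed.

Lemma closed_lef (T : topologicalType) (R : realType) (f g : T -> R) :
  continuous f -> continuous g -> closed [set x | f x <= g x].
Proof.
move=> cf cg.
have -> : [set x | f x <= g x] = (fun x => g x - f x) @^-1` [set y : R | 0 <= y].
  by apply/seteqP; split => x /=; rewrite subr_ge0.
apply: preimage_closed; last exact: closed_ge.
by move=> x _; apply: contB.
Qed.

Lemma closed_eqf (T : topologicalType) (R : realType) (f : T -> R) c :
  continuous f -> closed [set x | f x = c].
Proof.
move=> cf; apply: (@preimage_closed _ _ f [set y : R | y = c]); last exact: closed_eq.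
by move=> x _; apply: cf.
Qed.

Lemma cont_coord (R : realType) n j : continuous (fun th : prm R n => th ord0 j).
Proof. exact: coord_continuous. Qed.

Lemma Theta_closed (R : realType) n (Z : set ('I_n -> R)) : closed (Theta Z).
Proof.
have cmu : forall r, continuous (fun th : prm R n => mu th r) by move=> r; apply: cont_coord.
have cwv : forall r i, continuous (fun th : prm R n => wv th r i).
  by move=> r i; apply: cont_coord.
apply: closedI; first apply: closedI; first apply: closedI; first apply: closedI.
- apply: closed_forall => r; apply: closed_lef => //; exact: cst_continuous.
- by apply: closed_eqf; apply: cont_sum.
- apply: closed_forall => r; case: (pselect (Z (zb R r))) => hz.
    have -> : [set x : prm R n | ~ Z (zb R r) -> mu x r = 0] = setT.
      by apply/seteqP; split => x //= _ /(_ hz).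
    exact: closedT.
  have -> : [set x : prm R n | ~ Z (zb R r) -> mu x r = 0] = [set x | mu x r = 0].
    by apply/seteqP; split => x /=; [apply | move=> ->].
  exact: closed_eqf.
- apply: closed_forall => r; apply: closed_lef.
    by apply: cont_sum => i; apply: contM.
  exact: contM.
- apply: closed_forall => r; apply: closed_forall => i; case e: (bv r i).
    have -> : [set x : prm R n | true = false -> wv x r i = 0] = setT.
      by apply/seteqP; split => x.
    exact: closedT.
  have -> : [set x : prm R n | false = false -> wv x r i = 0] = [set x | wv x r i = 0].
    by apply/seteqP; split => x /=; [apply | move=> ->].
  exact: closed_eqf.
Qed.

Lemma le_sum1 (R : realType) k (F : 'I_k -> R) j :
  (forall i, 0 <= F i) -> F j <= \sum_i F i.
Proof.
by move=> h; rewrite (bigD1 j) //= lerDl sumr_ge0.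
Qed.

Lemma Theta_compact (R : realType) n (Z : set ('I_n -> R)) : compact (Theta Z).
Proof.
have cb := @rV_compact _ (Kn n * n.+1) (fun=> `[(-1 : R), 1]%classic)
  (fun _ => @segment_compact R (-1) 1).
have := compact_closedI cb (@Theta_closed R n Z).
rewrite setIidr // => th [[[[h1 h2] h3] h4] h5] j /=.
rewrite in_itv /=.
case: (mxvec_indexP j) => r c.
have mu1 : mu th r <= 1 by rewrite -h2; apply: le_sum1.
case: (unliftP ord0 c) => [i ->|->].
  have : wv th r i ^+ 2 <= mu th r ^+ 2.
    apply: le_trans (h4 r); apply: (@le_sum1 _ _ (fun i => wv th r i ^+ 2)).
    by move=> ?; rewrite sqr_ge0.
  have := h1 r; move: mu1; rewrite /wv /mu => mu1 hm hw.
  apply/andP; split; nra.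
by have := h1 r; move: mu1; rewrite /mu => mu1 hm; apply/andP; split; lra.
Qed.

Lemma zb_rank (R : realType) n (Z : set ('I_n -> R))
  (HZ : forall z, Z z -> forall i, z i = 0 \/ z i = 1) z : Z z ->
  zb R (enum_rank ([ffun i => z i == 1] : {ffun 'I_n -> bool})) = z.
Proof.
move=> Zz; apply: funext => i; rewrite /zb /bv enum_rankK ffunE.
by case: (HZ _ Zz i) => ->; rewrite ?eqxx // eq_sym oner_eq0.
Qed.

Lemma Theta_nonempty (R : realType) n (Z : set ('I_n -> R))
  (HZ : forall z, Z z -> forall i, z i = 0 \/ z i = 1) z0 : Z z0 -> Theta Z !=set0.
Proof.
move=> Zz0.
pose r0 : 'I_(Kn n) := enum_rank ([ffun i => z0 i == 1] : {ffun 'I_n -> bool}).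
have zb0 : zb R r0 = z0 by exact: (zb_rank HZ Zz0).
exists (mkprm (fun r => (r == r0)%:R) (fun _ _ => 0)).
split; [split; [split; [split|]|]|].
- by move=> r; rewrite mu_mk ler0n.
- rewrite /=; under eq_bigr => r _ do rewrite mu_mk.
  rewrite (_ : \sum_r (r == r0)%:R = \sum_r (r == r0)%:R * (1 : R)).
    by rewrite sum_delta.
  by apply: eq_bigr => r _; rewrite mulr1.
- move=> r hr; rewrite mu_mk; case: eqP => // er.
  by exfalso; apply: hr; rewrite er zb0.
- move=> r; under eq_bigr => i _ do rewrite wv_mk expr0n.
  by rewrite big1 // sqr_ge0.
- by move=> r i _; rewrite wv_mk.
Qed.

Definition ptsub (R : realType) n (p q : pt R n) : pt R n :=
  (fun i => p.1 i - q.1 i, fun i => p.2 i - q.2 i).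

Lemma dotp_sub (R : realType) n (d p q : pt R n) :
  dotp d p - dotp d q = dotp d (ptsub p q).
Proof.
rewrite /dotp /= opprD addrACA -!sumrB; congr (_ + _); apply: eq_bigr => i _; ring.
Qed.

Lemma sum_id (R : realType) n (u v : 'I_n -> R) t :
  \sum_i (u i - t * v i) ^+ 2 =
  \sum_i u i * u i - 2 * t * \sum_i u i * v i + t ^+ 2 * \sum_i v i * v i.
Proof.
rewrite !mulr_sumr -sumrB -big_split /=; apply: eq_bigr => i _; ring.
Qed.

Lemma dotp_ge0 (R : realType) n (d : pt R n) : 0 <= dotp d d.
Proof.
by rewrite /dotp addr_ge0 // sumr_ge0 // => i _; rewrite -expr2 sqr_ge0.
Qed.

Theorem theorem1 (R : realType) (n : nat) (Z : set ('I_n -> R))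
  (HZ : forall z, Z z -> forall i, z i = 0 \/ z i = 1) :
  conv (Xset Z) = \bigcap_(alpha in [set: 'I_n -> R]) Pset Z alpha.
Proof.
apply/seteqP; split.
  by move=> p hp alpha _; exact: (conv_mono (X_sub_P0 HZ alpha) hp).
move=> p hp.
have hP : forall a, Pset Z a p by move=> a; exact: hp.
have [z0 Zz0] : exists z0, Z z0.
  have [m [l [q [_ h2 h3 _ _]]]] := hP (fun=> 0).
  case: m l q h2 h3 => [|m] l q h2 h3.
    by move: h2; rewrite big_ord0 => /esym/eqP; rewrite oner_eq0.
  by exists (q ord0).2; case: (h3 ord0).
pose g := fun th : prm R n => dotp (ptsub p (Fp th)) (ptsub p (Fp th)).
have cg : continuous g.
  rewrite /g /dotp /=.
  apply: contD.
    apply: cont_sum => i; apply: contM; apply: contB; try exact: cst_continuous;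
      apply: cont_sum => r; apply: cont_coord.
  apply: cont_sum => i; apply: contM; apply: contB; try exact: cst_continuous;
    apply: cont_sum => r; apply: contM; try exact: cst_continuous; apply: cont_coord.
have cgw : {within Theta Z, continuous g} by apply: continuous_subspaceT.
have [th ThTh thmin] := compact_EVT_min (Theta_nonempty HZ Zz0) (@Theta_compact R n Z) cgw.
have Th : Theta Z th by move: ThTh; rewrite inE.
set q := Fp th.
set d := ptsub p q.
have [g0|gn0] := eqVneq (g th) 0.
  have hd1 : forall i, d.1 i = 0.
    move=> i; apply/eqP; rewrite -sqrf_eq0 expr2; apply/eqP.
    apply: (@psumr_eq0P _ _ xpredT (fun i => d.1 i * d.1 i)) => //.
      by move=> j _; rewrite -expr2 sqr_ge0.
    apply/le_anti; rewrite sumr_ge0 ?andbT; last by move=> j _; rewrite -expr2 sqr_ge0.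
    move: g0; rewrite /g /dotp -/q -/d => g0.
    by rewrite -[X in _ <= X]g0 lerDl sumr_ge0 // => j _; rewrite -expr2 sqr_ge0.
  have hd2 : forall k, d.2 k = 0.
    move=> k; apply/eqP; rewrite -sqrf_eq0 expr2; apply/eqP.
    apply: (@psumr_eq0P _ _ xpredT (fun i => d.2 i * d.2 i)) => //.
      by move=> j _; rewrite -expr2 sqr_ge0.
    apply/le_anti; rewrite sumr_ge0 ?andbT; last by move=> j _; rewrite -expr2 sqr_ge0.
    move: g0; rewrite /g /dotp -/q -/d => g0.
    by rewrite -[X in _ <= X]g0 lerDr sumr_ge0 // => j _; rewrite -expr2 sqr_ge0.
  have -> : p = q.
    rewrite [p]surjective_pairing [q]surjective_pairing; congr pair; apply: funext => i;
      apply/eqP; rewrite -subr_eq0; apply/eqP; [exact: hd1 i | exact: hd2 i].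
  exact: (Fp_conv Zz0 Th).
have gpos : 0 < g th by rewrite lt_neqAle eq_sym gn0 dotp_ge0.
have var : forall y, Xset Z y -> dotp d y <= dotp d q.
  move=> y Xy; rewrite leNgt; apply/negP => hc.
  set c := dotp d y - dotp d q.
  have c0 : 0 < c by rewrite subr_gt0.
  set E := dotp (ptsub y q) (ptsub y q).
  have E0 : 0 <= E by apply: dotp_ge0.
  set t := c / (E + c).
  have Ec : 0 < E + c by rewrite ltr_wpDl.
  have ht : t * (E + c) = c by rewrite /t divfK // gt_eqF.
  have t0 : 0 < t by rewrite /t divr_gt0.
  have t1 : t <= 1 by rewrite /t ler_pdivrMr // mul1r lerDr.
  have [th' [Th' hF]] := merge HZ Th Xy (ltW t0) t1.
  have := thmin th'; rewrite inE => /(_ Th').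
  have -> : g th' = dotp d d - 2 * t * c + t ^+ 2 * E.
    rewrite /g hF /dotp /=.
    have hrw : forall (u1 u2 w : 'I_n -> R), \sum_i (u1 i - ((1 - t) * u2 i + t * w i)) *
        (u1 i - ((1 - t) * u2 i + t * w i)) = \sum_i ((u1 i - u2 i) - t * (w i - u2 i)) ^+ 2.
      by move=> u1 u2 w; apply: eq_bigr => i _; ring.
    rewrite !hrw !sum_id /c dotp_sub /E /dotp /=; ring.
  rewrite -/d -/q -/(g th).
  have : g th = dotp d d by [].
  move=> -> hle.
  have h1 : 2 * t * c <= t ^+ 2 * E by lra.
  have h2 : 2 * c <= t * E.
    rewrite -(ler_pM2l t0) (_ : t * (2 * c) = 2 * t * c); last by ring.
    by rewrite (_ : t * (t * E) = t ^+ 2 * E) //; ring.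
  nra.
have := conv_dot (hP d.1) (c := dotp d q).
move=> /(_ _) hle.
have : dotp d p <= dotp d q.
  apply: hle => y0 /(P0_le HZ d.2) [y [Xy hy]].
  by apply: le_trans hy (var y Xy).
rewrite -subr_le0 dotp_sub -/d => hle2.
have : g th = dotp d d by [].
by move=> e; move: gpos; rewrite e => /lt_le_trans /(_ hle2); rewrite ltxx.
Qed.
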